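(* Let $\lambda,\mu\in(0,1)$ with $\lambda+\mu>1$, and let $c:=(1-\mu)/\lambda$. Define $f_1:[0,c]\to[0,1]$, $f_1(x)=\lambda x+\mu$, and $f_2:[c,1]\to[0,1]$, $f_2(x)=\lambda x+\mu-1$. Then every map $f:[0,1]\to[0,1]$ such that $f|_{[0,c)}=f_1|_{[0,c)}$, $f|_{(c,1]}=f_2|_{(c,1]}$ and $c\notin f^k([f(1),f(0)])$ for all $k\in\mathbb{N}$, satisfies properties P1–P6 below with $N=2$, $c_0=0$, $c_1=c$, $c_2=1$, $X_1=[0,c)$, $X_2=(c,1]$.
   Context: For $N\geqslant 2$, points $c_0<c_1<\dots<c_N$, $X=[c_0,c_N]$, $X_1=[c_0,c_1)$, $X_i=(c_{i-1},c_i)$ for $1<i<N$, $X_N=(c_{N-1},c_N]$, and a map $f:X\to X$, define: $\Delta:=\{c_1,\dots,c_{N-1}\}$; $f_i$ the continuous extension of $f|_{X_i}$ to $\overline{X_i}$ (when it exists); $\widetilde X:=\bigcap_{n\geqslant0}f^{-n}(X\setminus\Delta)$. Atoms: $F_i(A):=\overline{f(A\cap X_i)}$, $A_{i_1\dots i_n}:=F_{i_n}\circ\dots\circ F_{i_1}(X)$ is an atom of generation $n$ if non-empty, $\mathcal{A}_n$ their set, $\mathcal{A}_n(x):=\{A\in\mathcal{A}_n:\exists t\in\mathbb{N},f^{t+n}(x)\in A\}$; attractor $\Lambda:=\bigcap_{n\geqslant1}\bigcup_{A\in\mathcal{A}_n}A$. $\Delta_{lr}(x)$ is the set of $c_i\in\Delta$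 such that for every $n\geqslant1$ there is $A\in\mathcal{A}_n(x)$ with $c_i\in A$, $f^{t+n}(x)\in A\cap X_i$ and $f^{t'+n}(x)\in A\cap X_{i+1}$ for some $t,t'\in\mathbb{N}$. P1: $f$ is a piecewise contracting map with contraction pieces $X_1,\dots,X_N$ (i.e. $f$ is discontinuous at every point of $\Delta$ and contracting with a constant $<1$ on each $X_i$), and $f|_{X_i}$ is affine with slope $\lambda\in(0,1)$ (the same for all $i$). P2: $f$ satisfies the separation property: each $f_i$ is injective and $f_i(\overline{X_i})\cap f_j(\overline{X_j})=\emptyset$ for $i\neq j$. P3: the attractor $\Lambda$ is a Cantor set. P4: $\bigcup_{i=1}^{N-1}\{f_i(c_i),f_{i+1}(c_i)\}\subset\widetilde X$. P5: there is $i\in\{1,\dots,N-1\}$ such that $\{f^n(f_i(c_i))\}_{n\in\mathbb{N}}$ or $\{f^n(f_{i+1}(c_i))\}_{n\in\mathbb{N}}$ is dense in $\Lambda$. P6: for every $x\in\widetilde X$ and $i\in\{1,\dots,N-1\}$, $c_i\in\Delta_{lr}(x)$. *)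

(* Defs.v *)
From Stdlib Require Import Reals Lra List.
Open Scope R_scope.

Definition iterf (f : R -> R) (n : nat) (x : R) : R := Nat.iter n f x.

(* Partition data: N pieces, points cs 0 < cs 1 < ... < cs N. *)
Definition Xall (N : nat) (cs : nat -> R) (x : R) : Prop := cs 0%nat <= x <= cs N.

Definition Xp (N : nat) (cs : nat -> R) (i : nat) (x : R) : Prop :=
  if Nat.eqb i 1 then cs 0%nat <= x < cs 1%nat
  else if Nat.eqb i N then cs (N - 1)%nat < x <= cs N
  else cs (i - 1)%nat < x < cs i.

Definition Xcl (cs : nat -> R) (i : nat) (x : R) : Prop := cs (i - 1)%nat <= x <= cs i.

Definition Delta (N : nat) (cs : nat -> R) (x : R) : Prop :=
  exists i, (1 <= i <= N - 1)%nat /\ x = cs i.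

Definition cl (S : R -> Prop) (y : R) : Prop :=
  forall eps, 0 < eps -> exists z, S z /\ Rabs (z - y) < eps.

Definition cont_within (D : R -> Prop) (g : R -> R) (x : R) : Prop :=
  forall eps, 0 < eps -> exists delta, 0 < delta /\
    forall y, D y -> Rabs (y - x) < delta -> Rabs (g y - g x) < eps.

Definition cont_ext (N : nat) (cs : nat -> R) (f : R -> R) (i : nat) (g : R -> R) : Prop :=
  (forall x, Xp N cs i x -> g x = f x) /\
  (forall x, Xcl cs i x -> cont_within (Xcl cs i) g x).

(* G i = f_i for every i in 1..N (the extensions are unique when they exist) *)
Definition exts (N : nat) (cs : nat -> R) (f : R -> R) (G : nat -> R -> R) : Prop :=
  forall i, (1 <= i <= N)%nat -> cont_ext N cs f i (G i).

Definition Xtilde (N : nat) (cs : nat -> R) (f : R -> R) (x : R) : Prop :=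
  forall n, Xall N cs (iterf f n x) /\ ~ Delta N cs (iterf f n x).

Definition Fset (N : nat) (cs : nat -> R) (f : R -> R) (i : nat) (A : R -> Prop) : R -> Prop :=
  cl (fun z => exists x, A x /\ Xp N cs i x /\ z = f x).

(* A_{i_1 ... i_n} = F_{i_n} o ... o F_{i_1} (X), for the word [i_1; ...; i_n] *)
Definition atomset (N : nat) (cs : nat -> R) (f : R -> R) (w : list nat) : R -> Prop :=
  fold_left (fun A i => Fset N cs f i A) w (Xall N cs).

Definition is_atom_word (N : nat) (cs : nat -> R) (f : R -> R) (n : nat) (w : list nat) : Prop :=
  length w = n /\ Forall (fun i => (1 <= i <= N)%nat) w /\ exists y, atomset N cs f w y.

Definition Lambda (N : nat) (cs : nat -> R) (f : R -> R) (y : R) : Prop :=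
  forall n, (1 <= n)%nat -> exists w, is_atom_word N cs f n w /\ atomset N cs f w y.

Definition in_Delta_lr (N : nat) (cs : nat -> R) (f : R -> R) (x : R) (i : nat) : Prop :=
  (1 <= i <= N - 1)%nat /\
  forall n, (1 <= n)%nat -> exists w, is_atom_word N cs f n w /\
    atomset N cs f w (cs i) /\
    (exists t, atomset N cs f w (iterf f (t + n) x) /\ Xp N cs i (iterf f (t + n) x)) /\
    (exists t', atomset N cs f w (iterf f (t' + n) x) /\ Xp N cs (i + 1) (iterf f (t' + n) x)).

Definition cantor_set (S : R -> Prop) : Prop :=
  (exists y, S y) /\
  (forall y, cl S y -> S y) /\
  (exists M, forall y, S y -> Rabs y <= M) /\
  (forall y, S y -> forall eps, 0 < eps -> exists z, S z /\ z <> y /\ Rabs (z - y) < eps) /\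
  (forall a b, S a -> S b -> a < b -> exists z, a < z < b /\ ~ S z).

Definition orbit (f : R -> R) (x : R) : R -> Prop := fun z => exists n, z = iterf f n x.

Definition dense_in (S L : R -> Prop) : Prop := forall y, L y -> cl S y.

Definition P1 (N : nat) (cs : nat -> R) (f : R -> R) (lam : R) : Prop :=
  (forall x, Xall N cs x -> Xall N cs (f x)) /\
  (forall i, (1 <= i <= N - 1)%nat -> ~ cont_within (Xall N cs) f (cs i)) /\
  (exists k, 0 <= k < 1 /\ forall i, (1 <= i <= N)%nat ->
     forall x y, Xp N cs i x -> Xp N cs i y -> Rabs (f x - f y) <= k * Rabs (x - y)) /\
  (0 < lam < 1) /\
  (forall i, (1 <= i <= N)%nat -> exists b, forall x, Xp N cs i x -> f x = lam * x + b).

Definition P2 (N : nat) (cs : nat -> R) (f : R -> R) : Prop :=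
  exists G, exts N cs f G /\
  (forall i, (1 <= i <= N)%nat -> forall x y, Xcl cs i x -> Xcl cs i y -> G i x = G i y -> x = y) /\
  (forall i j, (1 <= i <= N)%nat -> (1 <= j <= N)%nat -> i <> j ->
     forall x y, Xcl cs i x -> Xcl cs j y -> G i x <> G j y).

Definition P3 (N : nat) (cs : nat -> R) (f : R -> R) : Prop :=
  cantor_set (Lambda N cs f).

Definition P4 (N : nat) (cs : nat -> R) (f : R -> R) : Prop :=
  exists G, exts N cs f G /\
  forall i, (1 <= i <= N - 1)%nat ->
    Xtilde N cs f (G i (cs i)) /\ Xtilde N cs f (G (i + 1)%nat (cs i)).

Definition P5 (N : nat) (cs : nat -> R) (f : R -> R) : Prop :=
  exists G, exts N cs f G /\
  exists i, (1 <= i <= N - 1)%nat /\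
    (dense_in (orbit f (G i (cs i))) (Lambda N cs f) \/
     dense_in (orbit f (G (i + 1)%nat (cs i))) (Lambda N cs f)).

Definition P6 (N : nat) (cs : nat -> R) (f : R -> R) : Prop :=
  forall x, Xtilde N cs f x -> forall i, (1 <= i <= N - 1)%nat -> in_Delta_lr N cs f x i.

Definition pts2 (c : R) (k : nat) : R :=
  match k with 0%nat => 0 | 1%nat => c | _ => 1 end.

(* Main.v *)
Require Import Defs.
From Stdlib Require Import Reals Lra Lia List Classical Arith.
Open Scope R_scope.

Lemma iter_S (g : R -> R) n x : iterf g (S n) x = g (iterf g n x).
Proof. reflexivity. Qed.
Lemma iter_Sr (g : R -> R) n x : iterf g (S n) x = iterf g n (g x).
Proof. induction n; unfold iterf in *; simpl in *; [reflexivity| rewrite <- IHn; reflexivity]. Qed.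
Lemma iter_add (g : R -> R) m n x : iterf g (m + n) x = iterf g m (iterf g n x).
Proof. induction m; [reflexivity|]. simpl plus. rewrite !iter_S, IHm. reflexivity. Qed.

Lemma pow_pos' l n : 0 < l -> 0 < l ^ n.
Proof. intros; apply pow_lt; lra. Qed.
Lemma pow_le1 l n : 0 < l < 1 -> l ^ n <= 1.
Proof. intros H; induction n; simpl; [lra|]. assert (0 < l^n) by (apply pow_lt; lra). nra. Qed.
Lemma pow_mono l m n : 0 < l < 1 -> (m <= n)%nat -> l ^ n <= l ^ m.
Proof. intros H Hmn. replace n with ((n - m) + m)%nat by lia. rewrite pow_add.
  assert (0 < l^m) by (apply pow_lt; lra). pose proof (pow_le1 l (n-m) H). nra. Qed.
Lemma pow_small l e : 0 < l < 1 -> 0 < e -> exists N, forall n, (n >= N)%nat -> l ^ n < e.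
Proof. intros H He. destruct (pow_lt_1_zero l) with (y := e) as [N HN].
  rewrite Rabs_pos_eq; lra. lra. exists N; intros n Hn. specialize (HN n Hn).
  rewrite Rabs_pos_eq in HN; [lra|]. apply pow_le; lra. Qed.

Fixpoint sumR (n : nat) (g : nat -> R) : R :=
  match n with O => 0 | S n => sumR n g + g n end.

Lemma sumR_ext n g h : (forall k, (k < n)%nat -> g k = h k) -> sumR n g = sumR n h.
Proof. induction n; intros H; simpl; [reflexivity|]. rewrite IHn, H; [reflexivity|lia|intros; apply H; lia]. Qed.
Lemma sumR_plus n g h : sumR n (fun k => g k + h k) = sumR n g + sumR n h.
Proof. induction n; simpl; [lra|]. rewrite IHn; lra. Qed.

Lemma disj_dich l1 r1 l2 r2 : l1 < r1 -> l2 < r2 ->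
  (forall z, ~ (l1 < z < r1 /\ l2 < z < r2)) -> r1 <= l2 \/ r2 <= l1.
Proof.
  intros H1 H2 H. destruct (Rle_dec r1 l2); [left; lra|]. destruct (Rle_dec r2 l1); [right; lra|].
  exfalso. destruct (Rle_dec l1 l2), (Rle_dec r1 r2).
  - apply (H ((l2 + r1)/2)); lra.
  - apply (H ((l2 + r2)/2)); lra.
  - apply (H ((l1 + r1)/2)); lra.
  - apply (H ((l1 + r2)/2)); lra.
Qed.

Lemma measure_lemma n : forall (sel : nat -> bool) (l r : nat -> R) L R0,
  L <= R0 ->
  (forall k, (k < n)%nat -> sel k = true -> L <= l k /\ l k < r k /\ r k <= R0) ->
  (forall j k, (j < n)%nat -> (k < n)%nat -> j <> k -> sel j = true -> sel k = true ->
     forall z, ~ (l j < z < r j /\ l k < z < r k)) ->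
  sumR n (fun k => if sel k then r k - l k else 0) <= R0 - L.
Proof.
  induction n; intros sel l r L R0 HLR Hin Hd; simpl; [lra|].
  destruct (sel n) eqn:Hn.
  2:{ assert (sumR n (fun k => if sel k then r k - l k else 0) <= R0 - L); [|lra].
      apply IHn; auto. }
  destruct (Hin n) as (A1 & A2 & A3); auto.
  set (selL := fun k => andb (sel k) (if Rle_dec (r k) (l n) then true else false)).
  set (selR := fun k => andb (sel k) (negb (if Rle_dec (r k) (l n) then true else false))).
  assert (E : sumR n (fun k => if sel k then r k - l k else 0) =
     sumR n (fun k => if selL k then r k - l k else 0) + sumR n (fun k => if selR k then r k - l k else 0)).
  { rewrite <- sumR_plus. apply sumR_ext. intros k _. unfold selL, selR.
    destruct (sel k); simpl; [|lra]. destruct (Rle_dec (r k) (l n)); simpl; lra. }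
  assert (BL : sumR n (fun k => if selL k then r k - l k else 0) <= l n - L).
  { apply IHn; [lra| |].
    - intros k Hk Hs. unfold selL in Hs. apply andb_prop in Hs as [Hs1 Hs2].
      destruct (Rle_dec (r k) (l n)); [|discriminate]. destruct (Hin k) as (?&?&?); auto; lia || lra.
    - intros j k Hj Hk Hjk Hsj Hsk. unfold selL in *. apply andb_prop in Hsj as [? _]. apply andb_prop in Hsk as [? _].
      apply Hd; auto. }
  assert (BR : sumR n (fun k => if selR k then r k - l k else 0) <= R0 - r n).
  { apply IHn; [lra| |].
    - intros k Hk Hs. unfold selR in Hs. apply andb_prop in Hs as [Hs1 Hs2].
      destruct (Rle_dec (r k) (l n)); [discriminate|]. destruct (Hin k) as (?&?&?); auto.
      destruct (disj_dich (l k) (r k) (l n) (r n)); auto; try lra.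
      apply Hd; auto; lia.
    - intros j k Hj Hk Hjk Hsj Hsk. unfold selR in *. apply andb_prop in Hsj as [? _]. apply andb_prop in Hsk as [? _].
      apply Hd; auto. }
  lra.
Qed.

Lemma div_nonneg x y : 0 <= x -> 0 < y -> 0 <= x / y.
Proof. intros; unfold Rdiv; apply Rmult_le_pos; [auto| left; apply Rinv_0_lt_compat; auto]. Qed.

Section Dyn.
Variables (lam mu : R) (f : R -> R).
Hypothesis Hlam : 0 < lam < 1.
Hypothesis Hmu : 0 < mu < 1.
Hypothesis Hsum : lam + mu > 1.
Local Notation c := ((1 - mu) / lam).
Local Notation a := (lam + mu - 1).
Local Notation b := mu.
Hypothesis Hf01 : forall x, 0 <= x <= 1 -> 0 <= f x <= 1.
Hypothesis Hf1 : forall x, 0 <= x < c -> f x = lam * x + mu.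
Hypothesis Hf2 : forall x, c < x <= 1 -> f x = lam * x + mu - 1.
Hypothesis Hgap : forall (k : nat) x, f 1 <= x <= f 0 -> iterf f k x <> c.

Lemma lamc : lam * c = 1 - mu.
Proof. field. lra. Qed.
Lemma c_pos : 0 < c.
Proof. apply Rdiv_lt_0_compat; lra. Qed.
Lemma c_lt1 : c < 1.
Proof. pose proof lamc. pose proof c_pos. nra. Qed.
Lemma f0 : f 0 = b.
Proof. rewrite Hf1; [lra|]. pose proof c_pos; lra. Qed.
Lemma f1 : f 1 = a.
Proof. rewrite Hf2; [lra|]. pose proof c_lt1; lra. Qed.
Lemma a_pos : 0 < a. Proof. lra. Qed.
Lemma a_lt_b : a < b. Proof. lra. Qed.

Lemma Hgap' : forall k x, a <= x <= b -> iterf f k x <> c.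
Proof. intros k x H. apply Hgap. rewrite f0, f1. auto. Qed.

Lemma iter01 n x : 0 <= x <= 1 -> 0 <= iterf f n x <= 1.
Proof. intros H; induction n; [exact H|]. rewrite iter_S. apply Hf01; auto. Qed.

Lemma f_left x : 0 <= x < c -> b <= f x < 1.
Proof. intros H. rewrite Hf1 by auto. pose proof lamc. nra. Qed.
Lemma f_right x : c < x <= 1 -> 0 < f x <= a.
Proof. intros H. rewrite Hf2 by auto. pose proof lamc. nra. Qed.

Lemma f_img x : 0 <= x <= 1 -> x <> c -> (0 < f x <= a) \/ (b <= f x < 1).
Proof. intros H Hc. destruct (Rlt_dec x c).
  - right; apply f_left; lra.
  - left; apply f_right; lra. Qed.

Lemma f_affine u v : 0 <= u <= 1 -> 0 <= v <= 1 -> (u < c /\ v < c) \/ (c < u /\ c < v) ->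
  f v - f u = lam * (v - u).
Proof. intros Hu Hv [[? ?]|[? ?]].
  - rewrite !Hf1 by lra. ring.
  - rewrite !Hf2 by lra. ring. Qed.

Lemma f_inj u v : 0 <= u <= 1 -> 0 <= v <= 1 -> u <> c -> v <> c -> f u = f v -> u = v.
Proof. intros Hu Hv Hcu Hcv E.
  destruct (Rlt_dec u c), (Rlt_dec v c).
  - rewrite !Hf1 in E by lra. nra.
  - pose proof (f_left u). pose proof (f_right v). lra.
  - pose proof (f_left v). pose proof (f_right u). lra.
  - rewrite !Hf2 in E by lra. nra. Qed.

Lemma iter_inj n u v : 0 <= u <= 1 -> 0 <= v <= 1 ->
  (forall j, (j < n)%nat -> iterf f j u <> c) -> (forall j, (j < n)%nat -> iterf f j v <> c) ->
  iterf f n u = iterf f n v -> u = v.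
Proof. induction n; intros Hu Hv Hcu Hcv E; [exact E|].
  rewrite !iter_S in E. apply IHn; auto.
  all: try (intros j Hj; apply Hcu; lia).
  all: try (intros j Hj; apply Hcv; lia).
  apply f_inj; try apply iter01; auto. Qed.

Definition p k := iterf f k a.
Definition q k := iterf f k b.
Definition inG k z := p k < z < q k.

Lemma gapmap k : forall x, a <= x <= b -> iterf f k x = p k + lam ^ k * (x - a).
Proof.
  induction k; intros x Hx.
  - unfold p; simpl; ring.
  - rewrite iter_S. unfold p; rewrite iter_S. fold (p k).
    assert (Hpk : iterf f k a = p k) by reflexivity.
    assert (Hlk : 0 < lam ^ k) by (apply pow_lt; lra).
    assert (side : (iterf f k x < c /\ p k < c) \/ (c < iterf f k x /\ c < p k)).
    { pose proof (Hgap' k x Hx) as N1. pose proof (Hgap' k a) as N2.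
      assert (a <= a <= b) by lra. specialize (N2 H). rewrite Hpk in N2.
      destruct (Rlt_dec (p k) c), (Rlt_dec (iterf f k x) c).
      - left; lra.
      - exfalso. set (x' := a + (c - p k) / lam ^ k).
        assert (Ex : p k + lam ^ k * (x' - a) = c) by (unfold x'; field; lra).
        rewrite IHk in n. 2: lra.
        assert (x' <= x).
        { unfold x'. assert ((c - p k)/lam^k <= x - a); [|lra].
          apply (Rmult_le_reg_l (lam^k)); auto.
          replace (lam ^ k * ((c - p k) / lam ^ k)) with (c - p k) by (field; lra). lra. }
        assert (0 <= (c - p k)/lam^k) by (apply div_nonneg; lra).
        assert (a <= x') by (unfold x'; lra).
        apply (Hgap' k x'). split; lra.
        rewrite IHk; [exact Ex|]. split; lra.
      - exfalso. rewrite IHk in r by lra. assert (0 <= lam^k * (x - a)) by nra. lra.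
      - right; lra. }
    rewrite (IHk x Hx) in side.
    assert (Hx01 : 0 <= p k + lam^k * (x - a) <= 1). { rewrite <- IHk by lra. apply iter01; lra. }
    assert (Hp01 : 0 <= p k <= 1). { rewrite <- Hpk. apply iter01; lra. }
    pose proof (f_affine (p k) (p k + lam ^ k * (x - a)) Hp01 Hx01) as E.
    assert (E' : f (p k + lam ^ k * (x - a)) - f (p k) = lam * (p k + lam ^ k * (x - a) - p k))
      by (apply E; destruct side; [left|right]; lra).
    rewrite IHk by lra. simpl.
    replace (p k + lam ^ k * (x - a) - p k) with (lam^k*(x-a)) in E' by ring. lra.
Qed.

Lemma lamk_pos k : 0 < lam ^ k. Proof. apply pow_lt; lra. Qed.
Lemma lamk_le1 k : lam ^ k <= 1. Proof. apply pow_le1; lra. Qed.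

Lemma q_p k : q k = p k + lam ^ k * (1 - lam).
Proof. unfold q. rewrite gapmap by lra. ring. Qed.
Lemma p_orbit1 k : p k = iterf f (S k) 1.
Proof. unfold p. rewrite iter_Sr, f1. reflexivity. Qed.
Lemma q_orbit0 k : q k = iterf f (S k) 0.
Proof. unfold q. rewrite iter_Sr, f0. reflexivity. Qed.
Lemma p01 k : 0 <= p k <= 1. Proof. unfold p; apply iter01; lra. Qed.
Lemma q01 k : 0 <= q k <= 1. Proof. unfold q; apply iter01; lra. Qed.
Lemma p_nc k : p k <> c. Proof. unfold p; apply Hgap'; lra. Qed.
Lemma q_nc k : q k <> c. Proof. unfold q; apply Hgap'; lra. Qed.

Lemma inG_img k z : inG k z -> exists x, a < x < b /\ z = iterf f k x.
Proof. unfold inG; rewrite q_p. intros [H1 H2]. pose proof (lamk_pos k).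
  exists (a + (z - p k) / lam ^ k). assert (E: lam^k * ((z - p k)/lam^k) = z - p k) by (field; lra).
  assert (0 < (z - p k)/lam^k). { unfold Rdiv. apply Rmult_lt_0_compat; [lra|apply Rinv_0_lt_compat; lra]. }
  split; [split|].
  - lra.
  - assert ((z - p k)/lam^k < 1 - lam); [|lra]. apply (Rmult_lt_reg_l (lam^k)); auto. lra.
  - rewrite gapmap. replace (a + (z - p k) / lam ^ k - a) with ((z - p k)/lam^k) by ring. lra.
    split; [lra|]. assert ((z - p k)/lam^k < 1 - lam); [|lra]. apply (Rmult_lt_reg_l (lam^k)); auto. lra.
Qed.

Lemma img_inG k x : a < x < b -> inG k (iterf f k x).
Proof. intros H. unfold inG. rewrite q_p, gapmap by lra. pose proof (lamk_pos k).
  split; nra. Qed.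

Lemma gap_nc k : ~ (p k <= c <= q k).
Proof. intros [H1 H2]. rewrite q_p in H2. pose proof (lamk_pos k).
  set (x' := a + (c - p k) / lam ^ k).
  assert (E: lam^k * ((c - p k)/lam^k) = c - p k) by (field; lra).
  assert (0 <= (c - p k)/lam^k) by (apply div_nonneg; lra).
  assert ((c - p k)/lam^k <= 1 - lam).
  { apply (Rmult_le_reg_l (lam^k)); auto. lra. }
  apply (Hgap' k x'). unfold x'; lra.
  rewrite gapmap by (unfold x'; lra). unfold x'. replace (a + (c - p k) / lam ^ k - a) with ((c - p k)/lam^k) by ring. lra.
Qed.

Lemma gap_fwd k z : inG k z -> inG (S k) (f z).
Proof. intros H. destruct (inG_img k z H) as [x [Hx ->]]. rewrite <- iter_S. apply img_inG; auto. Qed.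

Lemma G0_iff z : inG 0 z <-> a < z < b.
Proof. unfold inG, p, q. simpl. tauto. Qed.

Lemma img_notG0 u : 0 <= u <= 1 -> u <> c -> ~ inG 0 (f u).
Proof. intros H1 H2 H. pose proof (proj1 (G0_iff _) H). destruct (f_img u H1 H2); lra. Qed.

Lemma gaps_disj_lt j k z : (j < k)%nat -> inG j z -> inG k z -> False.
Proof. intros Hjk Hj Hk. destruct (inG_img j z Hj) as [x1 [Hx1 E1]]. destruct (inG_img k z Hk) as [x2 [Hx2 E2]].
  replace k with (j + (k - j))%nat in E2 by lia. rewrite iter_add in E2. rewrite E1 in E2.
  apply iter_inj in E2; try lra.
  - destruct (k - j)%nat as [|d] eqn:Hd; [lia|]. rewrite iter_S in E2.
    apply (img_notG0 (iterf f d x2)). apply iter01; lra. apply Hgap'; lra.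
    rewrite <- E2. apply G0_iff. lra.
  - apply iter01; lra.
  - intros; apply Hgap'; lra.
  - intros i _. rewrite <- iter_add. apply Hgap'; lra.
Qed.

Lemma gaps_disj j k z : j <> k -> inG j z -> inG k z -> False.
Proof. intros H Hj Hk. destruct (Nat.lt_ge_cases j k).
  - eapply gaps_disj_lt; eauto.
  - eapply (gaps_disj_lt k j); eauto. lia. Qed.

Lemma gap_len k : p k < q k.
Proof. rewrite q_p. pose proof (lamk_pos k). nra. Qed.

Lemma p_notin j k : ~ inG j (p k).
Proof. intros H. destruct (Nat.eq_dec j k) as [->|Hne]. unfold inG in H; lra.
  pose proof (gap_len k). unfold inG in H.
  set (z := p k + Rmin (q j - p k) (q k - p k) / 2).
  assert (Rmin (q j - p k) (q k - p k) <= q j - p k) by apply Rmin_l.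
  assert (Rmin (q j - p k) (q k - p k) <= q k - p k) by apply Rmin_r.
  assert (0 < Rmin (q j - p k) (q k - p k)) by (apply Rmin_glb_lt; lra).
  apply (gaps_disj j k z Hne); unfold inG, z; lra. Qed.

Lemma q_notin j k : ~ inG j (q k).
Proof. intros H. destruct (Nat.eq_dec j k) as [->|Hne]. unfold inG in H; lra.
  pose proof (gap_len k). unfold inG in H.
  set (z := q k - Rmin (q k - p j) (q k - p k) / 2).
  assert (Rmin (q k - p j) (q k - p k) <= q k - p j) by apply Rmin_l.
  assert (Rmin (q k - p j) (q k - p k) <= q k - p k) by apply Rmin_r.
  assert (0 < Rmin (q k - p j) (q k - p k)) by (apply Rmin_glb_lt; lra).
  apply (gaps_disj j k z Hne); unfold inG, z; lra. Qed.

Lemma p_pos k : 0 < p k.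
Proof. destruct k. unfold p; simpl; lra. unfold p; rewrite iter_S.
  destruct (f_img (iterf f k a)); try lra. apply iter01; lra. apply Hgap'; lra. Qed.
Lemma q_lt1 k : q k < 1.
Proof. destruct k. unfold q; simpl; lra. unfold q; rewrite iter_S.
  destruct (f_img (iterf f k b)); try lra. apply iter01; lra. apply Hgap'; lra. Qed.

Lemma p_ne_q j k : p k <> q j.
Proof. intros E. destruct (lt_eq_lt_dec j k) as [[Hjk| ->]|Hkj].
  - unfold p, q in E. replace k with (j + (k - j))%nat in E by lia. rewrite iter_add in E.
    apply iter_inj in E; try lra.
    all: try (apply iter01; lra).
    all: try (intros i _; rewrite <- iter_add; apply Hgap'; lra).
    all: try (intros; apply Hgap'; lra).
    destruct (k - j)%nat as [|d] eqn:Hd; [lia|]. rewrite iter_S in E.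
      fold (p d) in E. pose proof (p01 d). pose proof (p_pos d). pose proof (p_nc d).
      destruct (Rlt_dec (p d) c).
      * rewrite Hf1 in E by lra. nra.
      * rewrite Hf2 in E by lra. nra.
  - pose proof (gap_len k). lra.
  - unfold p, q in E. replace j with (k + (j - k))%nat in E by lia. rewrite iter_add in E.
    apply iter_inj in E; try lra.
    all: try (apply iter01; lra).
    all: try (intros i _; rewrite <- iter_add; apply Hgap'; lra).
    all: try (intros; apply Hgap'; lra).
    destruct (j - k)%nat as [|d] eqn:Hd; [lia|]. rewrite iter_S in E.
      fold (q d) in E. pose proof (q01 d). pose proof (q_lt1 d). pose proof (q_nc d).
      destruct (Rlt_dec (q d) c).
      * rewrite Hf1 in E by lra. nra.
      * rewrite Hf2 in E by lra. nra.
Qed.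

Definition OK x := 0 <= x <= 1 /\ forall t, iterf f t x <> c.

Lemma OK_iter x n : OK x -> OK (iterf f n x).
Proof. intros [H1 H2]. split. apply iter01; auto. intros t. rewrite <- iter_add. auto. Qed.
Lemma OK0 : OK 0.
Proof. split; [lra|]. intros [|t]. simpl. pose proof c_pos; lra. rewrite <- q_orbit0. apply q_nc. Qed.
Lemma OK1 : OK 1.
Proof. split; [lra|]. intros [|t]. simpl. pose proof c_lt1; lra. rewrite <- p_orbit1. apply p_nc. Qed.

Lemma orbit_notin_gap x m k : OK x -> (k < m)%nat -> ~ inG k (iterf f m x).
Proof. intros [Hx Hc] Hkm H. destruct (inG_img k _ H) as [x2 [Hx2 E]].
  replace m with (k + (m - k))%nat in E by lia. rewrite iter_add in E.
  apply iter_inj in E; try lra.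
  - destruct (m - k)%nat as [|d] eqn:Hd; [lia|]. rewrite iter_S in E.
    apply (img_notG0 (iterf f d x)). apply iter01; auto. apply Hc.
    rewrite E. apply G0_iff. lra.
  - apply iter01; auto.
  - intros i _. rewrite <- iter_add. auto.
  - intros; apply Hgap'; lra.
Qed.


Lemma geom m : sumR m (fun k => lam ^ k * (1 - lam)) = 1 - lam ^ m.
Proof. induction m; simpl; [ring|]. rewrite IHm. ring. Qed.

Lemma gapfree_bound m u v : 0 <= u <= v -> v <= 1 ->
  (forall k, (k < m)%nat -> forall z, u < z < v -> ~ inG k z) -> v - u <= lam ^ m.
Proof.
  intros Huv Hv1 Hfree. destruct (Req_dec u v) as [->|Hne].
  { pose proof (lamk_pos m); lra. }
  set (l := fun k => if Nat.ltb k m then p k else u).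
  set (r := fun k => if Nat.ltb k m then q k else v).
  pose proof (measure_lemma (S m) (fun _ => true) l r 0 1) as ML.
  simpl in ML.
  assert (E1 : sumR m (fun k => r k - l k) = 1 - lam ^ m).
  { rewrite <- geom. apply sumR_ext. intros k Hk. unfold r, l.
    destruct (Nat.ltb_spec k m); [|lia]. rewrite q_p. ring. }
  assert (E2 : r m - l m = v - u).
  { unfold r, l. destruct (Nat.ltb_spec m m); [lia|]. reflexivity. }
  rewrite E1, E2 in ML. enough (1 - lam^m + (v - u) <= 1 - 0) by lra.
  apply ML; [lra| |].
  - intros k Hk _. unfold l, r. destruct (Nat.ltb_spec k m).
    + pose proof (p01 k); pose proof (q01 k); pose proof (gap_len k); lra.
    + lra.
  - intros j k Hj Hk Hjk _ _ z [Hz1 Hz2]. unfold l, r in *.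
    destruct (Nat.ltb_spec j m), (Nat.ltb_spec k m).
    + apply (gaps_disj j k z); auto.
    + apply (Hfree j H z); auto.
    + apply (Hfree k H0 z); auto.
    + lia.
Qed.

Lemma NI u v : 0 <= u < v -> v <= 1 -> exists z k, u < z < v /\ inG k z.
Proof.
  intros H1 H2. apply NNPP; intro H.
  assert (B : forall m, v - u <= lam ^ m).
  { intros m. apply gapfree_bound; try lra. intros k _ z Hz HG. apply H. exists z, k; auto. }
  destruct (pow_small lam (v - u)) as [N HN]; try lra.
  specialize (HN N (le_n N)). specialize (B N). lra.
Qed.

Lemma LS y e : 0 < y <= 1 -> (forall k, ~ inG k y) -> 0 < e -> exists k, y - e < q k <= y.
Proof.
  intros Hy Hn He. destruct (NI (Rmax 0 (y - e)) y) as [z [k [Hz HG]]].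
  - split; [apply Rmax_l|]. apply Rmax_lub_lt; lra.
  - lra.
  - exists k. pose proof (Rmax_r 0 (y - e)). unfold inG in HG.
    destruct (Rle_dec (q k) y). lra. exfalso. apply (Hn k). unfold inG; lra.
Qed.

Lemma RS y e : 0 <= y < 1 -> (forall k, ~ inG k y) -> 0 < e -> exists k, y <= p k < y + e.
Proof.
  intros Hy Hn He. destruct (NI y (Rmin 1 (y + e))) as [z [k [Hz HG]]].
  - split; [lra|]. apply Rmin_glb_lt; lra.
  - apply Rmin_l.
  - exists k. pose proof (Rmin_r 1 (y + e)). unfold inG in HG.
    destruct (Rle_dec y (p k)). lra. exfalso. apply (Hn k). unfold inG; lra.
Qed.


Local Notation cs := (pts2 c).
Local Notation A := (atomset 2 cs f).

Lemma Xp_info i x : Xp 2 cs i x -> 0 <= x <= 1 /\ x <> c.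
Proof. pose proof c_pos; pose proof c_lt1.
  destruct i as [|[|[|i]]]; unfold Xp; simpl; intros; lra. Qed.
Lemma Xp1 x : Xp 2 cs 1 x <-> 0 <= x < c.
Proof. unfold Xp; simpl; tauto. Qed.
Lemma Xp2 x : Xp 2 cs 2 x <-> c < x <= 1.
Proof. unfold Xp; simpl; tauto. Qed.

Lemma cl_incl (S : R -> Prop) y : S y -> cl S y.
Proof. intros H e He. exists y. split; auto. rewrite Rminus_diag, Rabs_R0; lra. Qed.

Lemma atomset_app w i : A (w ++ i :: nil) = Fset 2 cs f i (A w).
Proof. unfold atomset; rewrite fold_left_app; reflexivity. Qed.

Lemma atomset_nil y : A nil y <-> 0 <= y <= 1.
Proof. unfold atomset, Xall; simpl; tauto. Qed.

Definition V n y := 0 <= y <= 1 /\ forall k, (k < n)%nat -> ~ inG k y.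

Lemma V_closed n (S : R -> Prop) y : (forall z, S z -> V n z) -> cl S y -> V n y.
Proof.
  intros HS Hcl. split; [split|].
  - destruct (Rle_dec 0 y); auto. exfalso. destruct (Hcl (- y)) as [z [Hz Hd]]; [lra|].
    apply Rabs_def2 in Hd. destruct (HS z Hz) as [[? ?] _]. lra.
  - destruct (Rle_dec y 1); auto. exfalso. destruct (Hcl (y - 1)) as [z [Hz Hd]]; [lra|].
    apply Rabs_def2 in Hd. destruct (HS z Hz) as [[? ?] _]. lra.
  - intros k Hk HG. unfold inG in HG.
    destruct (Hcl (Rmin (y - p k) (q k - y))) as [z [Hz Hd]]; [apply Rmin_glb_lt; lra|].
    apply Rabs_def2 in Hd. pose proof (Rmin_l (y - p k) (q k - y)). pose proof (Rmin_r (y - p k) (q k - y)).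
    destruct (HS z Hz) as [_ HH]. apply (HH k Hk). unfold inG; lra.
Qed.

Lemma V_step n x : V n x -> x <> c -> V (S n) (f x).
Proof.
  intros [Hx Hk] Hc. split; [apply Hf01; auto|]. intros [|k] Hlt HG.
  - apply (img_notG0 x); auto.
  - destruct (inG_img (S k) _ HG) as [x2 [Hx2 E]]. rewrite iter_S in E.
    apply f_inj in E; auto. apply (Hk k); [lia|]. rewrite E. apply img_inG; auto.
    apply iter01; lra. apply Hgap'; lra.
Qed.

Lemma atoms_sub w : forall y, A w y -> V (length w) y.
Proof.
  induction w as [|i w IH] using rev_ind; intros y Hy.
  - apply atomset_nil in Hy. split; auto. intros k Hk; simpl in Hk; lia.
  - rewrite atomset_app in Hy. rewrite length_app. simpl. replace (length w + 1)%nat with (S (length w)) by lia.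
    unfold Fset in Hy. eapply V_closed; [|exact Hy].
    intros z [x [Hx [Hxi ->]]]. apply V_step. apply IH; auto. apply (Xp_info i x Hxi).
Qed.

Definition side y : nat := if Rlt_dec y c then 1%nat else 2%nat.
Definition word n z := map (fun j => side (iterf f j z)) (seq 0 n).

Lemma word_S n z : word (S n) z = word n z ++ side (iterf f n z) :: nil.
Proof. unfold word. rewrite seq_S, map_app. reflexivity. Qed.
Lemma word_len n z : length (word n z) = n.
Proof. unfold word. rewrite length_map, length_seq. reflexivity. Qed.
Lemma side_12 y : (1 <= side y <= 2)%nat.
Proof. unfold side; destruct (Rlt_dec y c); lia. Qed.
Lemma word_Forall n z : Forall (fun i => (1 <= i <= 2)%nat) (word n z).
Proof. apply Forall_forall. intros i Hi. unfold word in Hi. apply in_map_iff in Hi.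
  destruct Hi as [j [<- _]]. apply side_12. Qed.

Lemma Xp_side y : 0 <= y <= 1 -> y <> c -> Xp 2 cs (side y) y.
Proof. intros H Hc. unfold side. destruct (Rlt_dec y c).
  - apply Xp1; lra. - apply Xp2; lra. Qed.

Lemma AO n z : 0 <= z <= 1 -> (forall j, (j < n)%nat -> iterf f j z <> c) -> A (word n z) (iterf f n z).
Proof.
  induction n; intros Hz Hc.
  - simpl. apply atomset_nil. auto.
  - rewrite word_S, atomset_app. apply cl_incl. exists (iterf f n z). split; [|split].
    + apply IHn; auto; intros j Hj; apply Hc; lia.
    + apply Xp_side. apply iter01; auto. apply Hc; lia.
    + reflexivity.
Qed.

Lemma scale_bound L t r : 0 < L <= 1 -> -r < t < r -> -r < L * t < r.
Proof. intros. split; nra. Qed.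

Lemma SH n : forall z0, 0 <= z0 <= 1 -> (forall j, (j < n)%nat -> iterf f j z0 <> c) ->
  exists rho, 0 < rho /\ forall z, 0 <= z <= 1 -> z0 - rho < z < z0 + rho ->
    (forall j, (j <= n)%nat -> iterf f j z - iterf f j z0 = lam ^ j * (z - z0)) /\
    (forall j, (j < n)%nat -> side (iterf f j z) = side (iterf f j z0) /\ iterf f j z <> c).
Proof.
  induction n; intros z0 Hz0 Hc.
  - exists 1. split; [lra|]. intros z Hz Hr. split.
    + intros j Hj. assert (j = 0%nat) by lia. subst. simpl. ring.
    + intros; lia.
  - destruct (IHn z0 Hz0) as [rho [Hrho HS]]. { intros; apply Hc; lia. }
    assert (Hcn : iterf f n z0 <> c) by (apply Hc; lia).
    set (d := Rabs (iterf f n z0 - c)).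
    assert (Hd : 0 < d) by (apply Rabs_pos_lt; lra).
    exists (Rmin rho d). split; [apply Rmin_glb_lt; auto|].
    intros z Hz Hr. pose proof (Rmin_l rho d). pose proof (Rmin_r rho d).
    destruct (HS z Hz) as [H1 H2]; [lra|].
    assert (En := H1 n (le_n n)).
    pose proof (lamk_pos n); pose proof (lamk_le1 n).
    assert (Bd : - d < lam ^ n * (z - z0) < d) by (apply scale_bound; lra).
    assert (Side : (iterf f n z < c /\ iterf f n z0 < c) \/ (c < iterf f n z /\ c < iterf f n z0)).
    { unfold d in Bd. destruct (Rlt_dec (iterf f n z0) c).
      - rewrite Rabs_left in Bd by lra. left; lra.
      - rewrite Rabs_right in Bd by lra. right; lra. }
    split.
    + intros j Hj. destruct (Nat.eq_dec j (S n)) as [->|Hne]; [|apply H1; lia].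
      rewrite !iter_S. rewrite f_affine; try (apply iter01; lra).
      rewrite En. simpl. ring. destruct Side; [left|right]; lra.
    + intros j Hj. destruct (Nat.eq_dec j n) as [->|Hne]; [|apply H2; lia].
      unfold side. destruct Side as [[? ?]|[? ?]].
      * destruct (Rlt_dec (iterf f n z) c), (Rlt_dec (iterf f n z0) c); try lra. split; [reflexivity|lra].
      * destruct (Rlt_dec (iterf f n z) c), (Rlt_dec (iterf f n z0) c); try lra. split; [reflexivity|lra].
Qed.

Lemma BO n : exists z, 0 < z < 1 /\ iterf f n z = c /\ forall j, (j < n)%nat -> iterf f j z <> c.
Proof.
  pose proof lamc. pose proof c_pos. pose proof c_lt1.
  induction n.
  - exists c. split; [lra|]. split; [reflexivity|]. intros; lia.
  - destruct IHn as [zn [Hzn [Ezn Hcn]]].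
    assert (Nab : ~ (a <= zn <= b)). { intros Hab. apply (Hgap' n zn Hab Ezn). }
    assert (Pre : exists z', 0 < z' < 1 /\ z' <> c /\ f z' = zn).
    { destruct (Rlt_dec zn a).
      - exists ((zn - mu + 1)/lam). assert (E : lam * ((zn - mu + 1)/lam) = zn - mu + 1) by (field; lra).
        assert (c < (zn - mu + 1)/lam) by nra. assert ((zn - mu + 1)/lam < 1) by nra.
        split; [lra|]. split; [lra|]. rewrite Hf2 by lra. lra.
      - assert (zn > b) by lra.
        exists ((zn - mu)/lam). assert (E : lam * ((zn - mu)/lam) = zn - mu) by (field; lra).
        assert (0 < (zn - mu)/lam) by nra. assert ((zn - mu)/lam < c) by nra.
        split; [lra|]. split; [lra|]. rewrite Hf1 by lra. lra. }
    destruct Pre as [z' [Hz' [Hc' Ef]]].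
    exists z'. split; auto. split.
    + rewrite iter_Sr, Ef. auto.
    + intros [|j] Hj. simpl; auto. rewrite iter_Sr, Ef. apply Hcn; lia.
Qed.

Lemma AL n : exists d, 0 < d /\ exists W, length W = n /\ Forall (fun i => (1 <= i <= 2)%nat) W /\
  forall y, c - d < y < c + d -> A W y.
Proof.
  destruct (BO n) as [z0 [Hz0 [Ez0 Hc0]]].
  destruct (SH n z0) as [rho [Hrho HS]]; [lra|auto|].
  set (r2 := Rmin rho (Rmin z0 (1 - z0))).
  assert (Hr2 : 0 < r2) by (apply Rmin_glb_lt; [auto|apply Rmin_glb_lt; lra]).
  pose proof (Rmin_l rho (Rmin z0 (1 - z0))). pose proof (Rmin_r rho (Rmin z0 (1 - z0))).
  pose proof (Rmin_l z0 (1 - z0)). pose proof (Rmin_r z0 (1 - z0)).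
  pose proof (lamk_pos n).
  exists (lam ^ n * r2). split; [nra|]. exists (word n z0). split; [apply word_len|]. split; [apply word_Forall|].
  intros y Hy. set (t := (y - c) / lam ^ n).
  assert (Et : lam ^ n * t = y - c) by (unfold t; field; lra).
  assert (Bt : - r2 < t < r2) by (split; nra).
  set (z := z0 + t).
  destruct (HS z) as [K1 K2]; [unfold z, r2 in *; lra| unfold z, r2 in *; lra|].
  assert (Ez : iterf f n z = y). { pose proof (K1 n (le_n n)) as HH. rewrite Ez0 in HH. replace (z - z0) with t in HH by (unfold z; ring). lra. }
  rewrite <- Ez. replace (word n z0) with (word n z).
  - apply AO. unfold z, r2 in *; lra. intros j Hj. apply K2; auto.
  - unfold word. apply map_ext_in. intros j Hj. apply in_seq in Hj. apply K2. lia.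
Qed.

Lemma atoms_sup n : forall y, V n y -> exists w, length w = n /\ Forall (fun i => (1 <= i <= 2)%nat) w /\ A w y.
Proof.
  pose proof lamc. pose proof c_pos. pose proof c_lt1.
  induction n; intros y [Hy Hk].
  - exists nil. split; [reflexivity|]. split; [constructor|]. apply atomset_nil; auto.
  - assert (Hn0 : ~ (a < y < b)). { intros Hab. apply (Hk 0%nat); [lia|]. apply G0_iff; auto. }
    assert (Back : forall x, 0 <= x <= 1 -> x <> c -> f x = y -> V n x).
    { intros x Hx Hxc E. split; auto. intros k Hkn HG. apply (Hk (S k)); [lia|]. rewrite <- E. apply gap_fwd; auto. }
    destruct (Req_dec y 1) as [Ey1|Ny1]; [|destruct (Req_dec y 0) as [Ey0|Ny0]].
    + destruct (AL n) as [d [Hd [W [HW1 [HW2 HW3]]]]].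
      exists (W ++ 1%nat :: nil). split; [rewrite length_app; simpl; lia|]. split.
      { apply Forall_app; split; auto. }
      rewrite atomset_app. intros e He. set (t := Rmin (Rmin d e) c / 2).
      pose proof (Rmin_l (Rmin d e) c). pose proof (Rmin_r (Rmin d e) c).
      pose proof (Rmin_l d e). pose proof (Rmin_r d e).
      assert (0 < Rmin (Rmin d e) c) by (apply Rmin_glb_lt; [apply Rmin_glb_lt|]; lra).
      exists (f (c - t)). split.
      * exists (c - t). split; [apply HW3; unfold t; lra|]. split; [apply Xp1; unfold t; lra|reflexivity].
      * rewrite Hf1 by (unfold t; lra). rewrite Ey1. apply Rabs_def1; unfold t; nra.
    + destruct (AL n) as [d [Hd [W [HW1 [HW2 HW3]]]]].
      exists (W ++ 2%nat :: nil). split; [rewrite length_app; simpl; lia|]. split.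
      { apply Forall_app; split; auto. }
      rewrite atomset_app. intros e He. set (t := Rmin (Rmin d e) (1 - c) / 2).
      pose proof (Rmin_l (Rmin d e) (1 - c)). pose proof (Rmin_r (Rmin d e) (1 - c)).
      pose proof (Rmin_l d e). pose proof (Rmin_r d e).
      assert (0 < Rmin (Rmin d e) (1 - c)) by (apply Rmin_glb_lt; [apply Rmin_glb_lt|]; lra).
      exists (f (c + t)). split.
      * exists (c + t). split; [apply HW3; unfold t; lra|]. split; [apply Xp2; unfold t; lra|reflexivity].
      * rewrite Hf2 by (unfold t; lra). rewrite Ey0. apply Rabs_def1; unfold t; nra.
    + destruct (Rle_dec b y).
      * set (x := (y - mu)/lam). assert (E : lam * x = y - mu) by (unfold x; field; lra).
        assert (Hx : 0 <= x < c) by nra.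
        assert (Efx : f x = y) by (rewrite Hf1 by lra; lra).
        destruct (IHn x) as [w [Hw1 [Hw2 Hw3]]]. apply (Back x); lra.
        exists (w ++ 1%nat :: nil). split; [rewrite length_app; simpl; lia|]. split.
        { apply Forall_app; split; auto. }
        rewrite atomset_app. apply cl_incl. exists x. split; [exact Hw3|]. split; [apply Xp1; lra|auto].
      * assert (0 < y <= a) by lra.
        set (x := (y - mu + 1)/lam). assert (E : lam * x = y - mu + 1) by (unfold x; field; lra).
        assert (Hx : c < x <= 1) by nra.
        assert (Efx : f x = y) by (rewrite Hf2 by lra; lra).
        destruct (IHn x) as [w [Hw1 [Hw2 Hw3]]]. apply (Back x); lra.
        exists (w ++ 2%nat :: nil). split; [rewrite length_app; simpl; lia|]. split.
        { apply Forall_app; split; auto. }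
        rewrite atomset_app. apply cl_incl. exists x. split; [exact Hw3|]. split; [apply Xp2; lra|auto].
Qed.

Lemma Lambda_iff y : Lambda 2 cs f y <-> (0 <= y <= 1 /\ forall k, ~ inG k y).
Proof.
  split.
  - intros HL. destruct (HL 1%nat (le_n 1)) as [w [[Hw1 _] Hw]].
    pose proof (atoms_sub w y Hw) as [H01 _]. split; auto.
    intros k. destruct (HL (S k)) as [w' [[Hw1' _] Hw']]; [lia|].
    pose proof (atoms_sub w' y Hw') as [_ Hk]. apply Hk. lia.
  - intros [H01 Hk] n Hn. destruct (atoms_sup n y) as [w [Hw1 [Hw2 Hw3]]].
    { split; auto. }
    exists w. split; auto. split; auto. split; auto. exists y; auto.
Qed.


Lemma BS u v : 0 <= u <= 1 -> 0 <= v <= 1 -> u <> c -> v <> c -> f u <= f v ->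
  (forall z, f u < z < f v -> ~ inG 0 z) -> u <= v /\ ((u < c /\ v < c) \/ (c < u /\ c < v)).
Proof.
  intros Hu Hv Hcu Hcv Hle Hfree.
  destruct (Rlt_dec u c), (Rlt_dec v c).
  - rewrite !Hf1 in Hle by lra. split; [nra|left; lra].
  - pose proof (f_left u). pose proof (f_right v). lra.
  - pose proof (f_left v). pose proof (f_right u). exfalso. apply (Hfree ((a + b)/2)).
    lra. apply G0_iff; lra.
  - rewrite !Hf2 in Hle by lra. split; [nra|right; lra].
Qed.

Lemma PB e : forall u v K, OK u -> OK v -> iterf f e u <= iterf f e v ->
  (forall k, (k < K + e)%nat -> forall z, iterf f e u < z < iterf f e v -> ~ inG k z) ->
  u <= v /\ (forall k, (k < K)%nat -> forall z, u < z < v -> ~ inG k z) /\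
  iterf f e v - iterf f e u = lam ^ e * (v - u).
Proof.
  induction e; intros u v K Hu Hv Hle Hfree.
  - simpl in *. split; auto. split; [|ring]. intros k Hk. apply Hfree. lia.
  - rewrite !iter_Sr in *.
    destruct (IHe (f u) (f v) (S K)) as [L1 [L2 L3]].
    + apply (OK_iter u 1); auto.
    + apply (OK_iter v 1); auto.
    + auto.
    + intros k Hk. apply Hfree. lia.
    + destruct Hu as [Hu Hcu]. destruct Hv as [Hv Hcv].
      destruct (BS u v) as [B1 B2]; auto. apply (Hcu 0%nat). apply (Hcv 0%nat).
      { intros z Hz. apply L2; auto. lia. }
      assert (Ef : f v - f u = lam * (v - u)) by (apply f_affine; auto).
      split; auto. split.
      * intros k Hk z Hz HG. apply (L2 (S k) ltac:(lia) (f z)); [|apply gap_fwd; auto].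
        assert (Ez1 : f z - f u = lam * (z - u)) by (apply f_affine; lra).
        assert (Ez2 : f v - f z = lam * (v - z)) by (apply f_affine; lra).
        split; nra.
      * rewrite L3, Ef. simpl. ring.
Qed.

Lemma maxlemma m X : 0 <= X -> exists i, (i <= m)%nat /\ iterf f i 0 <= X /\
  forall i', (i' <= m)%nat -> iterf f i' 0 <= X -> iterf f i' 0 <= iterf f i 0.
Proof.
  intros HX. induction m.
  - exists 0%nat. split; auto. split; [simpl; lra|]. intros i' Hi' _. assert (i' = 0%nat) by lia. subst; lra.
  - destruct IHm as [i [Hi [HiX Hmax]]].
    destruct (Rle_dec (iterf f (S m) 0) X) as [HS|HS]; [destruct (Rle_dec (iterf f (S m) 0) (iterf f i 0)) as [HS2|HS2]|].
    + exists i. split; [lia|]. split; auto. intros i' Hi' HX'. destruct (Nat.eq_dec i' (S m)) as [->|]; auto. apply Hmax; auto; lia.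
    + exists (S m). split; auto. split; auto. intros i' Hi' HX'. destruct (Nat.eq_dec i' (S m)) as [->|]; [lra|].
      assert (iterf f i' 0 <= iterf f i 0) by (apply Hmax; auto; lia). lra.
    + exists i. split; [lia|]. split; auto. intros i' Hi' HX'. destruct (Nat.eq_dec i' (S m)) as [->|]; [lra|]. apply Hmax; auto; lia.
Qed.

Lemma Chain x m : OK x -> exists i, (i <= m)%nat /\ iterf f i 0 <= iterf f m x /\
  (forall k, (k < m)%nat -> forall z, iterf f i 0 < z < iterf f m x -> ~ inG k z) /\
  iterf f m x - iterf f i 0 <= lam ^ m.
Proof.
  intros Hx. assert (Hm01 := iter01 m x (proj1 Hx)).
  destruct (maxlemma m (iterf f m x)) as [i [Hi [HiX Hmax]]]; [lra|].
  assert (Free : forall k, (k < m)%nat -> forall z, iterf f i 0 < z < iterf f m x -> ~ inG k z).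
  { intros k Hk z Hz HG. assert (N := orbit_notin_gap x m k Hx Hk).
    unfold inG in HG. destruct (Rle_dec (q k) (iterf f m x)).
    - assert (q k <= iterf f i 0). { rewrite q_orbit0. apply Hmax; [lia|]. rewrite <- q_orbit0. auto. } lra.
    - apply N. unfold inG; lra. }
  exists i. split; auto. split; auto. split; auto.
  apply gapfree_bound; auto. split; auto. apply iter01; lra. lra.
Qed.

Lemma finmin T' (g : nat -> R) : (forall i, g i <> c) -> exists e, 0 < e /\ forall i, (i < T')%nat -> e <= Rabs (g i - c).
Proof.
  intros Hg. induction T'.
  - exists 1. split; [lra|]. intros; lia.
  - destruct IHT' as [e [He Hi]]. assert (0 < Rabs (g T' - c)) by (apply Rabs_pos_lt; specialize (Hg T'); lra).
    exists (Rmin e (Rabs (g T' - c))). split; [apply Rmin_glb_lt; auto|].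
    intros i Hi'. destruct (Nat.eq_dec i T') as [->|]; [apply Rmin_r|].
    pose proof (Rmin_l e (Rabs (g T' - c))). pose proof (Hi i ltac:(lia)). lra.
Qed.

Lemma c_notin k : ~ inG k c.
Proof. intros H. apply (gap_nc k). unfold inG in H. lra. Qed.

Lemma late0 T' e : 0 < e -> exists i0, (i0 >= T')%nat /\ Rabs (iterf f i0 0 - c) < e.
Proof.
  intros He. destruct (finmin T' (fun i => iterf f i 0)) as [eta [Heta Hmin]].
  { intros i. apply (proj2 OK0). }
  pose proof c_pos. pose proof c_lt1.
  destruct (LS c (Rmin eta e)) as [k Hk]; [lra|apply c_notin|apply Rmin_glb_lt; auto|].
  pose proof (q_nc k). pose proof (Rmin_l eta e). pose proof (Rmin_r eta e).
  exists (S k). rewrite <- q_orbit0.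
  assert (Rabs (q k - c) < Rmin eta e) by (apply Rabs_def1; lra).
  split; [|lra]. destruct (le_lt_dec T' (S k)); auto. specialize (Hmin (S k) l). rewrite <- q_orbit0 in Hmin. lra.
Qed.

Lemma TSA x : OK x -> forall d T, 0 < d -> exists s, (s >= T)%nat /\ c - d < iterf f s x < c + d.
Proof.
  intros Hx d T Hd. pose proof lamc.
  destruct (pow_small lam (d/2)) as [N HN]; [lra|lra|].
  set (T' := Nat.max T N).
  assert (HT' : lam ^ T' < d/2) by (apply HN; unfold T'; lia).
  destruct (late0 T' (d/2)) as [i0 [Hi0 Hc0]]; [lra|].
  apply Rabs_def2 in Hc0.
  set (m := (i0 + T')%nat).
  destruct (Chain x m Hx) as [i [Him [H1 [H2 H3]]]].
  destruct (le_lt_dec i0 i) as [Hle|Hlt].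
  - set (r := (i - i0)%nat). set (dd := (m - i)%nat).
    destruct (PB r (iterf f i0 0) (iterf f (i0 + dd) x) 0) as [P1 [_ P3]].
    + apply OK_iter, OK0.
    + apply OK_iter; auto.
    + rewrite <- !iter_add. replace (r + i0)%nat with i by (unfold r; lia).
      replace (r + (i0 + dd))%nat with m by (unfold r, dd; lia). auto.
    + intros k Hk z. rewrite <- !iter_add. replace (r + i0)%nat with i by (unfold r; lia).
      replace (r + (i0 + dd))%nat with m by (unfold r, dd; lia). apply H2. unfold r in Hk; lia.
    + rewrite <- !iter_add in P3. replace (r + i0)%nat with i in P3 by (unfold r; lia).
      replace (r + (i0 + dd))%nat with m in P3 by (unfold r, dd; lia).
      assert (Em : lam ^ m = lam ^ r * lam ^ (i0 + dd)) by (rewrite <- pow_add; f_equal; unfold r, dd, m in *; lia).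
      pose proof (lamk_pos r).
      assert (B : iterf f (i0 + dd) x - iterf f i0 0 <= lam ^ (i0 + dd)) by nra.
      assert (lam ^ (i0 + dd) <= lam ^ T') by (apply pow_mono; auto; lia).
      exists (i0 + dd)%nat. split; [unfold T' in *; lia|]. lra.
  - set (dd := (m - i)%nat).
    destruct (PB i 0 (iterf f dd x) dd) as [P1 [P2 P3]].
    + apply OK0.
    + apply OK_iter; auto.
    + rewrite <- iter_add. replace (i + dd)%nat with m by (unfold dd; lia). auto.
    + intros k Hk z. rewrite <- iter_add. replace (i + dd)%nat with m by (unfold dd; lia). apply H2. unfold dd in Hk; lia.
    + rewrite <- iter_add in P3. replace (i + dd)%nat with m in P3 by (unfold dd; lia).
      assert (Em : lam ^ m = lam ^ i * lam ^ dd) by (rewrite <- pow_add; f_equal; unfold dd; lia).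
      pose proof (lamk_pos i).
      assert (B : iterf f dd x <= lam ^ dd) by nra.
      destruct dd as [|d'] eqn:Hdd; [unfold m in *; lia|].
      rewrite iter_S in B, P2.
      assert (Hw := OK_iter x d' Hx). destruct Hw as [Hw01 Hwc].
      specialize (Hwc 0%nat). simpl in Hwc.
      assert (Fa : f (iterf f d' x) <= a).
      { destruct (Rle_dec (f (iterf f d' x)) a); auto. exfalso.
        pose proof (Rmin_l b (f (iterf f d' x))). pose proof (Rmin_r b (f (iterf f d' x))).
        assert (a < Rmin b (f (iterf f d' x))) by (apply Rmin_glb_lt; lra).
        apply (P2 0%nat ltac:(lia) ((a + Rmin b (f (iterf f d' x)))/2)).
        - lra.
        - apply G0_iff. lra. }
      assert (Wc : c < iterf f d' x).
      { destruct (Rlt_dec (iterf f d' x) c); [|lra]. pose proof (f_left (iterf f d' x)). lra. }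
      rewrite Hf2 in B by lra. simpl in B.
      assert (iterf f d' x - c <= lam ^ d') by nra.
      assert (lam ^ d' <= lam ^ T') by (apply pow_mono; auto; unfold m in *; lia).
      exists d'. split; [unfold T', m in *; lia|]. lra.
Qed.

Lemma OSA_right x : OK x -> forall d T, 0 < d -> exists s, (s >= T)%nat /\ c < iterf f s x < c + d.
Proof.
  intros Hx d T Hd. pose proof lamc. pose proof c_pos. pose proof c_lt1.
  destruct (RS c d) as [k Hk]; [lra|apply c_notin|auto|].
  pose proof (p_nc k).
  destruct (SH (S k) 1) as [rho [Hrho HS]]; [lra|intros; apply (proj2 OK1)|].
  set (d' := Rmin (Rmin rho (p k - c)) d).
  pose proof (Rmin_l (Rmin rho (p k - c)) d). pose proof (Rmin_r (Rmin rho (p k - c)) d).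
  pose proof (Rmin_l rho (p k - c)). pose proof (Rmin_r rho (p k - c)).
  assert (Hd' : 0 < d') by (apply Rmin_glb_lt; [apply Rmin_glb_lt|]; lra).
  destruct (TSA x Hx d' T Hd') as [s [Hs Hs2]].
  destruct (Rlt_dec c (iterf f s x)).
  - exists s. split; auto. unfold d' in *; lra.
  - assert (Hsc : iterf f s x < c). { destruct Hx as [_ Hc]. specialize (Hc s). lra. }
    assert (Hs01 := iter01 s x (proj1 Hx)).
    set (y := iterf f (S s) x).
    assert (Ey : y = lam * iterf f s x + mu) by (unfold y; rewrite iter_S; apply Hf1; lra).
    assert (Hy01 : 0 <= y <= 1) by (apply iter01; apply Hx).
    destruct (HS y Hy01) as [K1 _]. unfold d' in *; nra.
    pose proof (K1 (S k) (le_n _)) as E. rewrite <- p_orbit1 in E.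
    pose proof (lamk_pos (S k)). pose proof (lamk_le1 (S k)).
    assert (y < 1) by nra.
    assert (1 - y < d') by (unfold d' in *; nra).
    assert (lam ^ S k * (y - 1) >= y - 1) by nra.
    assert (lam ^ S k * (y - 1) <= 0) by nra.
    exists (S k + S s)%nat. split; [lia|]. rewrite iter_add. fold y. unfold d' in *. lra.
Qed.

Lemma OSA_left x : OK x -> forall d T, 0 < d -> exists s, (s >= T)%nat /\ c - d < iterf f s x < c.
Proof.
  intros Hx d T Hd. pose proof lamc. pose proof c_pos. pose proof c_lt1.
  destruct (LS c d) as [k Hk]; [lra|apply c_notin|auto|].
  pose proof (q_nc k).
  destruct (SH (S k) 0) as [rho [Hrho HS]]; [lra|intros; apply (proj2 OK0)|].
  set (d' := Rmin (Rmin rho (c - q k)) d).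
  pose proof (Rmin_l (Rmin rho (c - q k)) d). pose proof (Rmin_r (Rmin rho (c - q k)) d).
  pose proof (Rmin_l rho (c - q k)). pose proof (Rmin_r rho (c - q k)).
  assert (Hd' : 0 < d') by (apply Rmin_glb_lt; [apply Rmin_glb_lt|]; lra).
  destruct (TSA x Hx d' T Hd') as [s [Hs Hs2]].
  destruct (Rlt_dec (iterf f s x) c).
  - exists s. split; auto. unfold d' in *; lra.
  - assert (Hsc : c < iterf f s x). { destruct Hx as [_ Hc]. specialize (Hc s). lra. }
    assert (Hs01 := iter01 s x (proj1 Hx)).
    set (y := iterf f (S s) x).
    assert (Ey : y = lam * iterf f s x + mu - 1) by (unfold y; rewrite iter_S; apply Hf2; lra).
    assert (Hy01 : 0 <= y <= 1) by (apply iter01; apply Hx).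
    destruct (HS y Hy01) as [K1 _]. unfold d' in *; nra.
    pose proof (K1 (S k) (le_n _)) as E. rewrite <- q_orbit0 in E.
    pose proof (lamk_pos (S k)). pose proof (lamk_le1 (S k)).
    assert (0 < y) by nra.
    assert (y < d') by (unfold d' in *; nra).
    assert (lam ^ S k * (y - 0) <= y) by nra.
    assert (0 < lam ^ S k * (y - 0)) by nra.
    exists (S k + S s)%nat. split; [lia|]. rewrite iter_add. fold y. unfold d' in *. lra.
Qed.


Definition Gx (i : nat) (x : R) : R := if Nat.eqb i 1 then lam * x + mu else lam * x + mu - 1.

Lemma G_lip i x y : Gx i y - Gx i x = lam * (y - x).
Proof. unfold Gx; destruct (Nat.eqb i 1); ring. Qed.

Lemma i12 i : (1 <= i <= 2)%nat -> i = 1%nat \/ i = 2%nat.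
Proof. lia. Qed.

Lemma exts_G : exts 2 cs f Gx.
Proof.
  intros i Hi. split.
  - intros x Hx. destruct (i12 i Hi) as [ -> | -> ].
    + apply Xp1 in Hx. rewrite Hf1 by auto. reflexivity.
    + apply Xp2 in Hx. rewrite Hf2 by auto. reflexivity.
  - intros x _ e He. exists e. split; auto. intros y _ Hy. rewrite G_lip, Rabs_mult, Rabs_pos_eq by lra.
    pose proof (Rabs_pos (y - x)). nra.
Qed.

Lemma Xtilde_OK y : Xtilde 2 cs f y -> OK y.
Proof.
  intros H. split.
  - destruct (H 0%nat) as [H0 _]. unfold Xall in H0. simpl in H0. exact H0.
  - intros t E. destruct (H t) as [_ H1]. apply H1. exists 1%nat. split; [simpl; lia|]. simpl. auto.
Qed.

Lemma OK_Xtilde y : OK y -> Xtilde 2 cs f y.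
Proof.
  intros [H01 Hc] n. split.
  - unfold Xall. simpl. apply iter01; auto.
  - intros [i [Hi E]]. assert (i = 1%nat) by (simpl in Hi; lia). subst. simpl in E. apply (Hc n E).
Qed.

Lemma P1_ok : P1 2 cs f lam.
Proof.
  pose proof c_pos; pose proof c_lt1; pose proof lamc.
  split; [|split; [|split; [|split]]].
  - intros x Hx. unfold Xall in *. simpl in *. apply Hf01; auto.
  - intros i Hi HC. assert (i = 1%nat) by (simpl in Hi; lia). subst i. simpl in HC.
    destruct (HC (1/4)) as [dl [Hdl Hc]]; [lra|].
    set (t := Rmin (Rmin dl c) (Rmin (1 - c) (1/4)) / 2).
    pose proof (Rmin_l (Rmin dl c) (Rmin (1 - c) (1/4))). pose proof (Rmin_r (Rmin dl c) (Rmin (1 - c) (1/4))).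
    pose proof (Rmin_l dl c). pose proof (Rmin_r dl c). pose proof (Rmin_l (1 - c) (1/4)). pose proof (Rmin_r (1 - c) (1/4)).
    assert (0 < Rmin (Rmin dl c) (Rmin (1 - c) (1/4))) by (repeat apply Rmin_glb_lt; lra).
    assert (A1 := Hc (c - t)). assert (A2 := Hc (c + t)).
    unfold Xall in A1, A2. simpl in A1, A2.
    assert (B1 : Rabs (f (c - t) - f c) < 1/4) by (apply A1; [unfold t; lra| apply Rabs_def1; unfold t; lra]).
    assert (B2 : Rabs (f (c + t) - f c) < 1/4) by (apply A2; [unfold t; lra| apply Rabs_def1; unfold t; lra]).
    rewrite Hf1 in B1 by (unfold t; lra). rewrite Hf2 in B2 by (unfold t; lra).
    apply Rabs_def2 in B1. apply Rabs_def2 in B2.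
    assert (lam * t < 1/8) by (unfold t; nra). nra.
  - exists lam. split; [lra|]. intros i Hi x y Hx Hy.
    assert (E : f x - f y = lam * (x - y)).
    { destruct (i12 i Hi) as [ -> | -> ].
      - apply Xp1 in Hx; apply Xp1 in Hy. rewrite !Hf1 by auto. ring.
      - apply Xp2 in Hx; apply Xp2 in Hy. rewrite !Hf2 by auto. ring. }
    rewrite E, Rabs_mult, Rabs_pos_eq by lra. lra.
  - auto.
  - intros i Hi. destruct (i12 i Hi) as [ -> | -> ].
    + exists mu. intros x Hx. apply Xp1 in Hx. apply Hf1; auto.
    + exists (mu - 1). intros x Hx. apply Xp2 in Hx. rewrite Hf2 by auto. ring.
Qed.

Lemma P2_ok : P2 2 cs f.
Proof.
  pose proof c_pos; pose proof c_lt1; pose proof lamc.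
  exists Gx. split; [apply exts_G|]. split.
  - intros i Hi x y _ _ E. pose proof (G_lip i x y). rewrite E in H2. nra.
  - intros i j Hi Hj Hij x y Hx Hy. unfold Xcl in *.
    destruct (i12 i Hi) as [ -> | -> ], (i12 j Hj) as [ -> | -> ]; try congruence; simpl in *; unfold Gx; simpl; nra.
Qed.

Lemma P3_ok : P3 2 cs f.
Proof.
  pose proof c_pos; pose proof c_lt1.
  unfold P3, cantor_set. split; [|split; [|split; [|split]]].
  - exists 0. apply Lambda_iff. split; [lra|]. intros k Hk. unfold inG in Hk. pose proof (p_pos k). lra.
  - intros y Hcl. apply Lambda_iff.
    assert (HV : V 0 y /\ forall k, ~ inG k y).
    { split.
      - eapply V_closed; [|exact Hcl]. intros z Hz. apply Lambda_iff in Hz. destruct Hz as [Hz1 Hz2]. split; [exact Hz1|]. intros k Hk; lia.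
      - intros k. assert (HVk : V (S k) y); [|apply (proj2 HVk); lia].
        eapply V_closed; [|exact Hcl]. intros z Hz. apply Lambda_iff in Hz. destruct Hz as [Hz1 Hz2]. split; auto. }
    destruct HV as [[HV _] HV2]. auto.
  - exists 1. intros y Hy. apply Lambda_iff in Hy. rewrite Rabs_pos_eq; lra.
  - intros y Hy e He. apply Lambda_iff in Hy as [Hy01 Hyn].
    assert (Left : 0 < y -> exists k, y - e < q k <= y) by (intros; apply LS; auto; lra).
    assert (Right : y < 1 -> exists k, y <= p k < y + e) by (intros; apply RS; auto; lra).
    assert (Lq : forall k, Lambda 2 cs f (q k)).
    { intros k; apply Lambda_iff. split; [pose proof (q01 k); lra|]. intros j; apply q_notin. }
    assert (Lp : forall k, Lambda 2 cs f (p k)).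
    { intros k; apply Lambda_iff. split; [pose proof (p01 k); lra|]. intros j; apply p_notin. }
    destruct (Req_dec y 0) as [->|Hy0]; [|destruct (Req_dec y 1) as [->|Hy1]].
    + destruct Right as [k Hk]; [lra|]. exists (p k). split; auto. pose proof (p_pos k).
      split; [lra|]. apply Rabs_def1; lra.
    + destruct Left as [k Hk]; [lra|]. exists (q k). split; auto. pose proof (q_lt1 k).
      split; [lra|]. apply Rabs_def1; lra.
    + destruct Left as [k Hk]; [lra|]. destruct Right as [j Hj]; [lra|].
      destruct (Req_dec (q k) y).
      * exists (p j). split; auto. split.
        -- intro E. apply (p_ne_q k j). lra.
        -- apply Rabs_def1; lra.
      * exists (q k). split; auto. split; auto. apply Rabs_def1; lra.
  - intros u v Hu Hv Huv. apply Lambda_iff in Hu as [Hu _]. apply Lambda_iff in Hv as [Hv _].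
    destruct (NI u v) as [z [k [Hz HG]]]; try lra.
    exists z. split; auto. intros HL. apply Lambda_iff in HL as [_ HL]. apply (HL k HG).
Qed.

Lemma P4_ok : P4 2 cs f.
Proof.
  pose proof lamc.
  exists Gx. split; [apply exts_G|]. intros i Hi. assert (i = 1%nat) by (simpl in Hi; lia). subst i.
  simpl. unfold Gx; simpl. split.
  - replace (lam * c + mu) with 1 by lra. apply OK_Xtilde, OK1.
  - replace (lam * c + mu - 1) with 0 by lra. apply OK_Xtilde, OK0.
Qed.

Lemma P5_ok : P5 2 cs f.
Proof.
  pose proof lamc.
  exists Gx. split; [apply exts_G|]. exists 1%nat. split; [simpl; lia|]. right.
  simpl. unfold Gx; simpl. replace (lam * c + mu - 1) with 0 by lra.
  intros y Hy e He. apply Lambda_iff in Hy as [Hy01 Hyn].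
  destruct (Req_dec y 0) as [->|Hy0].
  - exists 0. split; [exists 0%nat; reflexivity|]. rewrite Rminus_diag, Rabs_R0; lra.
  - destruct (LS y e) as [k Hk]; [lra|auto|auto|].
    exists (q k). split; [exists (S k); apply q_orbit0|]. apply Rabs_def1; lra.
Qed.

Lemma P6_ok : P6 2 cs f.
Proof.
  intros x Hx i Hi. assert (i = 1%nat) by (simpl in Hi; lia). subst i.
  apply Xtilde_OK in Hx.
  split; [simpl; lia|]. intros n Hn.
  destruct (AL n) as [d [Hd [W [HW1 [HW2 HW3]]]]].
  exists W. split; [split; auto; split; auto; exists c; apply HW3; lra|].
  split; [simpl; apply HW3; lra|]. split.
  - destruct (OSA_left x Hx d n Hd) as [s [Hs Hs2]]. exists (s - n)%nat.
    replace (s - n + n)%nat with s by lia. split; [apply HW3; lra|].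
    apply Xp1. pose proof (iter01 s x (proj1 Hx)). lra.
  - destruct (OSA_right x Hx d n Hd) as [s [Hs Hs2]]. exists (s - n)%nat.
    replace (s - n + n)%nat with s by lia. split; [apply HW3; lra|].
    simpl. apply Xp2. pose proof (iter01 s x (proj1 Hx)). lra.
Qed.

End Dyn.

Theorem proposition1 (lam mu : R) (f : R -> R) :
  0 < lam < 1 -> 0 < mu < 1 -> lam + mu > 1 ->
  let c := (1 - mu) / lam in
  (forall x, 0 <= x <= 1 -> 0 <= f x <= 1) ->
  (forall x, 0 <= x < c -> f x = lam * x + mu) ->
  (forall x, c < x <= 1 -> f x = lam * x + mu - 1) ->
  (forall (k : nat) x, f 1 <= x <= f 0 -> iterf f k x <> c) ->
  P1 2 (pts2 c) f lam /\ P2 2 (pts2 c) f /\ P3 2 (pts2 c) f /\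
  P4 2 (pts2 c) f /\ P5 2 (pts2 c) f /\ P6 2 (pts2 c) f.
Proof.
  intros Hlam Hmu Hsum c Hf01 Hf1 Hf2 Hgap. subst c.
  split; [eapply P1_ok; eassumption|].
  split; [eapply P2_ok; eassumption|].
  split; [eapply P3_ok; eassumption|].
  split; [eapply P4_ok; eassumption|].
  split; [eapply P5_ok; eassumption|].
  eapply P6_ok; eassumption.
Qed.
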